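(* Every tropical halo has tempered growth.
   Context: A halo is a commutative unital semiring with a partial order compatible with its operations ($x\le z,y\le t\Rightarrow xy\le zt,\ x+y\le z+t$). It is tropical if it is not $\{0\}$, its order is total, and $a+b=\max(a,b)$. A halo $R$ has tempered growth if for every non-zero $P\in\mathbb{N}[X]$ and every $x\in R$, ($x^n\le P(n)$ in $R$ for all $n\in\mathbb{N}$) implies $x\le1$; here a natural number $m$ is interpreted in $R$ as $1+\dots+1$. *)

(* Defs.v *)
From mathcomp Require Import all_boot all_algebra.
Set Implicit Arguments. Unset Strict Implicit. Unset Printing Implicit Defensive.
Import GRing.Theory.
Local Open Scope ring_scope.

Definition is_halo (R : comPzSemiRingType) (le : rel R) : Prop :=
  [/\ reflexive le, antisymmetric le, transitive le,
      (forall x y z t : R, le x z -> le y t -> le (x * y) (z * t)) &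
      (forall x y z t : R, le x z -> le y t -> le (x + y) (z + t))].

Definition is_tropical (R : comPzSemiRingType) (le : rel R) : Prop :=
  [/\ exists x : R, x != 0,
      total le &
      (forall a b : R, a + b = (if le a b then b else a))].

Definition tempered_growth (R : comPzSemiRingType) (le : rel R) : Prop :=
  forall (P : {poly nat}) (x : R), P != 0 ->
    (forall n : nat, le (x ^+ n) ((P.[n])%:R)) -> le x 1.

(* Main.v *)
Require Import Defs.
From mathcomp Require Import all_boot all_algebra.
Import GRing.Theory.
Local Open Scope ring_scope.

Lemma pos_eval1 (P : {poly nat}) : P != 0 -> (0 < P.[1%N])%N.
Proof.
move=> nz; rewrite horner_coef.
have : lead_coef P != 0%N by rewrite lead_coef_eq0.
rewrite /lead_coef.
case Es: (size P) => [|s]; first by move: nz; rewrite -size_poly_eq0 Es.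
rewrite big_ord_recr /= expr1n mulr1 => h.
by apply: (leq_trans _ (leq_addl _ _)); rewrite lt0n.
Qed.

Theorem lemma1p28 (R : comPzSemiRingType) (le : rel R) :
  is_halo le -> is_tropical le -> tempered_growth le.
Proof.
move=> [refl _ _ _ _] [_ _ hadd] P x nz H.
have one : forall m : nat, ((m.+1)%:R : R) = 1.
  elim=> [|m IH]; first by [].
  by rewrite mulrS IH hadd refl.
have := H 1%N; rewrite expr1.
have := @pos_eval1 P nz; case: (P.[1%N]) => [//|m] _.
by rewrite one.
Qed.
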